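(* Let $(C,f,P,Q)$ be a quadratic morphism over a field $K$ of characteristic $\ne2$. The following are equivalent: (a) the postcritical orbit $\{f^n(P),f^n(Q)\mid n\ge1\}$ has cardinality $\ge3$; (b) at least one of $f(P)$, $f(Q)$ is distinct from both $P$ and $Q$; (c) $(C,f,P,Q)$ is not isomorphic to $(\mathbb{P}^1_K,\ x\mapsto ax^{\pm2},\ 0,\ \infty)$ for any choice of sign and any $a\in K^\times$. Moreover, these conditions imply that the automorphism group of $(C,f,P,Q)$ is trivial.
   Context: A quadratic morphism over a scheme $S$ (over $\mathrm{Spec}\,\mathbb{Z}[\tfrac12]$) is a quadruple $(C,f,P,Q)$ where $C$ is a curve over $S$ that is Zariski-locally on $S$ isomorphic to $\mathbb{P}^1\times S$, $f\colon C\to C$ is an $S$-morphism of degree $2$ on every fiber, and $P,Q\in C(S)$ are sections whose images are precisely the critical points of $f$ (the points where $df=0$). Isomorphisms (and automorphisms) of quadratic morphisms are isomorphisms of curves over $S$ commuting with the maps and sending $P$ to $P'$ and $Q$ to $Q'$. $f^n$ denotes the $n$-th iterate of $f$. *)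

(* Defs.v *)
(* Quadratic morphisms over a field K, with C = P^1_K
   described in homogeneous coordinates. *)
From mathcomp Require Import all_boot all_algebra.
Set Implicit Arguments. Unset Strict Implicit. Unset Printing Implicit Defensive.
Import GRing.Theory.
Local Open Scope ring_scope.

Section QuadMorph.
Variable K : fieldType.

(* points of P^1(K): homogeneous coordinates (X, Y), required nonzero *)
Definition pt := (K * K)%type.
Definition pnz (p : pt) : bool := p != (0, 0).
(* equality of points of P^1 (for nonzero representatives) *)
Definition peq (p q : pt) : bool := p.1 * q.2 == p.2 * q.1.

Record bform := BF { bxx : K; bxy : K; byy : K }.
Record lform := LF { lx : K; ly : K }.

Definition bf_eval (F : bform) (p : pt) : K :=
  bxx F * p.1 ^+ 2 + bxy F * p.1 * p.2 + byy F * p.2 ^+ 2.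
Definition lf_eval (l : lform) (p : pt) : K := lx l * p.1 + ly l * p.2.

Definition bf_add (F G : bform) := BF (bxx F + bxx G) (bxy F + bxy G) (byy F + byy G).
Definition bf_scale (c : K) (F : bform) := BF (c * bxx F) (c * bxy F) (c * byy F).
Definition bf_sub (F G : bform) := bf_add F (bf_scale (-1) G).
Definition lmul (l m : lform) :=
  BF (lx l * lx m) (lx l * ly m + ly l * lx m) (ly l * ly m).

Definition dX (F : bform) := LF (2%:R * bxx F) (bxy F).
Definition dY (F : bform) := LF (bxy F) (2%:R * byy F).
(* Jacobian determinant F_X G_Y - F_Y G_X: its zeros are the critical points
   of the map [F : G] *)
Definition jac (F G : bform) := bf_sub (lmul (dX F) (dY G)) (lmul (dY F) (dX G)).

Definition vanish_lf (p : pt) := LF p.2 (- p.1).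

(* resultant of two binary quadratic forms (Sylvester) *)
Definition bres (F G : bform) : K :=
  let a0 := bxx F in let a1 := bxy F in let a2 := byy F in
  let b0 := bxx G in let b1 := bxy G in let b2 := byy G in
  (a0 * b2 - a2 * b0) ^+ 2 - (a0 * b1 - a1 * b0) * (a1 * b2 - a2 * b1).

(* an endomorphism of P^1 of degree <= 2, given by (X:Y) |-> (F : G) *)
Record qmap := QM { qF : bform; qG : bform }.
Definition qapply (f : qmap) (p : pt) : pt := (bf_eval (qF f) p, bf_eval (qG f) p).

(* (P^1_K, f, P, Q) is a quadratic morphism: f has degree exactly 2
   (F, G without common zero, i.e. nonzero resultant), P, Q are points and
   the critical locus {jac F G = 0} is exactly {P, Q}, i.e. the Jacobian is a
   nonzero multiple of the product of the linear forms vanishing at P, Q. *)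
Definition is_quad_morphism (f : qmap) (P Q : pt) : Prop :=
  [/\ pnz P, pnz Q, bres (qF f) (qG f) != 0 &
      exists c : K, c != 0 /\
        jac (qF f) (qG f) = bf_scale c (lmul (vanish_lf P) (vanish_lf Q))].

(* linear automorphisms of P^1 (elements of GL_2(K)) *)
Record lmap := LM { m1 : lform; m2 : lform }.
Definition lm_apply (M : lmap) (p : pt) : pt := (lf_eval (m1 M) p, lf_eval (m2 M) p).
Definition lm_det (M : lmap) : K := lx (m1 M) * ly (m2 M) - ly (m1 M) * lx (m2 M).

Definition lm_after (M : lmap) (f : qmap) : qmap :=
  QM (bf_add (bf_scale (lx (m1 M)) (qF f)) (bf_scale (ly (m1 M)) (qG f)))
     (bf_add (bf_scale (lx (m2 M)) (qF f)) (bf_scale (ly (m2 M)) (qG f))).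
Definition bf_subst (F : bform) (M : lmap) : bform :=
  bf_add (bf_add (bf_scale (bxx F) (lmul (m1 M) (m1 M)))
                 (bf_scale (bxy F) (lmul (m1 M) (m2 M))))
         (bf_scale (byy F) (lmul (m2 M) (m2 M))).
Definition qm_before (g : qmap) (M : lmap) : qmap :=
  QM (bf_subst (qF g) M) (bf_subst (qG g) M).
(* equality of morphisms P^1 -> P^1: the defining forms are proportional *)
Definition qm_equiv (f g : qmap) : Prop :=
  exists l : K, l != 0 /\ qF f = bf_scale l (qF g) /\ qG f = bf_scale l (qG g).

Definition qm_iso (M : lmap) (f : qmap) (P Q : pt) (g : qmap) (P' Q' : pt) : Prop :=
  [/\ lm_det M != 0, qm_equiv (lm_after M f) (qm_before g M),
      peq (lm_apply M P) P' & peq (lm_apply M Q) Q'].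

(* the standard maps x |-> a x^2 (s = true) and x |-> a x^-2 (s = false),
   x = X/Y, with 0 = (0:1), oo = (1:0) *)
Definition std_map (a : K) (s : bool) : qmap :=
  if s then QM (BF a 0 0) (BF 0 0 1) else QM (BF 0 0 a) (BF 1 0 0).
Definition zero_pt : pt := (0, 1).
Definition inf_pt : pt := (1, 0).

Definition in_postcrit (f : qmap) (P Q z : pt) : Prop :=
  exists n : nat, (1 <= n)%N /\
    (peq z (iter n (qapply f) P) \/ peq z (iter n (qapply f) Q)).
Definition postcrit_ge3 (f : qmap) (P Q : pt) : Prop :=
  exists z1 z2 z3 : pt,
    [/\ in_postcrit f P Q z1, in_postcrit f P Q z2 & in_postcrit f P Q z3] /\
    [/\ ~~ peq z1 z2, ~~ peq z1 z3 & ~~ peq z2 z3].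

Definition cond_b (f : qmap) (P Q : pt) : bool :=
  (~~ peq (qapply f P) P && ~~ peq (qapply f P) Q) ||
  (~~ peq (qapply f Q) P && ~~ peq (qapply f Q) Q).

Definition is_standard (f : qmap) (P Q : pt) : Prop :=
  exists (a : K) (s : bool) (M : lmap),
    a != 0 /\ qm_iso M f P Q (std_map a s) zero_pt inf_pt.

(* trivial automorphism group: every automorphism is a scalar matrix *)
Definition aut_trivial (f : qmap) (P Q : pt) : Prop :=
  forall M : lmap, qm_iso M f P Q f P Q ->
    [/\ ly (m1 M) = 0, lx (m2 M) = 0 & lx (m1 M) = ly (m2 M)].

End QuadMorph.

(* Main.v *)
Require Import Defs.
From mathcomp Require Import all_boot all_algebra ring.
Set Implicit Arguments. Unset Strict Implicit. Unset Printing Implicit Defensive.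
Import GRing.Theory.
Local Open Scope ring_scope.


Ltac unf := rewrite /jac /bf_subst /bf_sub /bf_add /bf_scale /lmul /dX /dY /lm_det /lm_after /qm_before /vanish_lf /=.

Definition dlt (K : fieldType) (p q : pt K) := p.1 * q.2 - p.2 * q.1.
Definition NN (K : fieldType) (P Q : pt K) := LM (vanish_lf P) (vanish_lf Q).
Definition NI (K : fieldType) (P Q : pt K) := LM (LF (- Q.1) P.1) (LF (- Q.2) P.2).
Definition fN (K : fieldType) (f : qmap K) (P Q : pt K) :=
  qm_before (lm_after (NN P Q) f) (NI P Q).

Definition lm_comp (K : fieldType) (M1 M2 : lmap K) :=
  LM (LF (lx (m1 M1) * lx (m1 M2) + ly (m1 M1) * lx (m2 M2))
         (lx (m1 M1) * ly (m1 M2) + ly (m1 M1) * ly (m2 M2)))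
     (LF (lx (m2 M1) * lx (m1 M2) + ly (m2 M1) * lx (m2 M2))
         (lx (m2 M1) * ly (m1 M2) + ly (m2 M1) * ly (m2 M2))).

Lemma jac_disc (K : fieldType) (F G : bform K) :
  bxy (jac F G) ^+ 2 - 4%:R * bxx (jac F G) * byy (jac F G) = 16%:R * bres F G.
Proof. case: F G => f0 f1 f2 [g0 g1 g2]; rewrite /= /bres /=. ring. Qed.

Lemma jac_subst (K : fieldType) (F G : bform K) (M : lmap K) :
  jac (bf_subst F M) (bf_subst G M) = bf_scale (lm_det M) (bf_subst (jac F G) M).
Proof.
case: F G M => f0 f1 f2 [g0 g1 g2] [[a b] [c e]]; unf; congr BF; ring.
Qed.

Lemma jac_after (K : fieldType) (f : qmap K) (M : lmap K) :
  jac (qF (lm_after M f)) (qG (lm_after M f)) = bf_scale (lm_det M) (jac (qF f) (qG f)).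
Proof.
case: f M => [[f0 f1 f2] [g0 g1 g2]] [[a b] [c e]]; unf; congr BF; ring.
Qed.

Lemma subst_comp (K : fieldType) (A : bform K) M1 M2 :
  bf_subst (bf_subst A M1) M2 = bf_subst A (lm_comp M1 M2).
Proof.
case: A => a0 a1 a2; case: M1 => [[x1 x2] [x3 x4]]; case: M2 => [[y1 y2] [y3 y4]];
rewrite /lm_comp; unf; congr BF; ring.
Qed.

Lemma subst_scal (K : fieldType) (A : bform K) k :
  bf_subst A (LM (LF k 0) (LF 0 k)) = bf_scale (k ^+ 2) A.
Proof. case: A => a0 a1 a2; unf; congr BF; ring. Qed.

Lemma comp_NI_NN (K : fieldType) (P Q : pt K) :
  lm_comp (NI P Q) (NN P Q) = LM (LF (dlt P Q) 0) (LF 0 (dlt P Q)).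
Proof. rewrite /lm_comp /NI /NN /dlt /vanish_lf /=; congr LM; congr LF; ring. Qed.

Lemma fN_formF (K : fieldType) (f : qmap K) (P Q : pt K) :
  bf_subst (qF (fN f P Q)) (NN P Q) = bf_scale (dlt P Q ^+ 2) (qF (lm_after (NN P Q) f)).
Proof. by rewrite /fN /= subst_comp comp_NI_NN subst_scal. Qed.

Lemma fN_formG (K : fieldType) (f : qmap K) (P Q : pt K) :
  bf_subst (qG (fN f P Q)) (NN P Q) = bf_scale (dlt P Q ^+ 2) (qG (lm_after (NN P Q) f)).
Proof. by rewrite /fN /= subst_comp comp_NI_NN subst_scal. Qed.

Lemma det_NN (K : fieldType) (P Q : pt K) : lm_det (NN P Q) = dlt P Q.
Proof. rewrite /lm_det /NN /dlt /=; ring. Qed.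

Lemma det_NI (K : fieldType) (P Q : pt K) : lm_det (NI P Q) = dlt P Q.
Proof. rewrite /lm_det /NI /dlt /=; ring. Qed.

Lemma jac_fN (K : fieldType) (f : qmap K) (P Q : pt K) (c : K) :
  jac (qF f) (qG f) = bf_scale c (lmul (vanish_lf P) (vanish_lf Q)) ->
  jac (qF (fN f P Q)) (qG (fN f P Q)) = BF 0 (c * dlt P Q ^+ 4) 0.
Proof.
move=> hj.
rewrite (_ : qF (fN f P Q) = bf_subst (qF (lm_after (NN P Q) f)) (NI P Q)) //.
rewrite (_ : qG (fN f P Q) = bf_subst (qG (lm_after (NN P Q) f)) (NI P Q)) //.
rewrite jac_subst jac_after hj det_NN det_NI.
move: hj => _; case: P => p1 p2; case: Q => q1 q2; rewrite /dlt /NI; unf; congr BF; ring.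
Qed.

Lemma jac_coef (K : fieldType) (a0 a1 a2 b0 b1 b2 : K) :
  jac (BF a0 a1 a2) (BF b0 b1 b2) =
  BF (2%:R * (a0*b1 - a1*b0)) (2%:R * 2%:R * (a0*b2 - a2*b0)) (2%:R * (a1*b2 - a2*b1)).
Proof. unf; congr BF; ring. Qed.

Lemma subst_eval (K : fieldType) (F : bform K) M x :
  bf_eval (bf_subst F M) x = bf_eval F (lm_apply M x).
Proof.
case: F => a0 a1 a2; case: M => [[y1 y2] [y3 y4]]; rewrite /bf_eval /lm_apply /lf_eval; unf; ring.
Qed.

Lemma after_eval (K : fieldType) (f : qmap K) M x :
  qapply (lm_after M f) x = lm_apply M (qapply f x).
Proof.
case: f => [[f0 f1 f2] [g0 g1 g2]]; case: M => [[y1 y2] [y3 y4]];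
rewrite /qapply /lm_apply /lf_eval /bf_eval; unf; congr pair; ring.
Qed.

Lemma S_dlt (K : fieldType) (f : qmap K) x y :
  dlt (qapply f x) (qapply f y) =
  dlt x y * ((bxx (qF f) * bxy (qG f) - bxy (qF f) * bxx (qG f)) * x.1 * y.1
    + (bxx (qF f) * byy (qG f) - byy (qF f) * bxx (qG f)) * (x.1 * y.2 + x.2 * y.1)
    + (bxy (qF f) * byy (qG f) - byy (qF f) * bxy (qG f)) * x.2 * y.2).
Proof.
case: f => [[f0 f1 f2] [g0 g1 g2]]; rewrite /dlt /qapply /bf_eval /=; ring.
Qed.

Lemma lin_dlt (K : fieldType) (M : lmap K) x y :
  dlt (lm_apply M x) (lm_apply M y) = lm_det M * dlt x y.
Proof. case: M => [[y1 y2] [y3 y4]]; rewrite /dlt /lm_apply /lf_eval /lm_det /=; ring. Qed.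



Lemma disc_lmul (K : fieldType) (c : K) (P Q : pt K) :
  let B := bf_scale c (lmul (vanish_lf P) (vanish_lf Q)) in
  bxy B ^+ 2 - 4%:R * bxx B * byy B = c ^+ 2 * dlt P Q ^+ 2.
Proof. case: P => p1 p2; case: Q => q1 q2; rewrite /dlt; unf; ring. Qed.

Lemma eval_scale (K : fieldType) (F : bform K) k x :
  bf_eval (bf_scale k F) x = k * bf_eval F x.
Proof. case: F => a0 a1 a2; rewrite /bf_eval /bf_scale /=; ring. Qed.

Lemma scale_scale (K : fieldType) (F : bform K) k1 k2 :
  bf_scale k1 (bf_scale k2 F) = bf_scale (k1 * k2) F.
Proof. case: F => a0 a1 a2; rewrite /bf_scale /=; congr BF; ring. Qed.

Lemma subst_BF_scale (K : fieldType) (M : lmap K) k a b c :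
  bf_subst (BF (k * a) (k * b) (k * c)) M = bf_scale k (bf_subst (BF a b c) M).
Proof. case: M => [[y1 y2] [y3 y4]]; unf; congr BF; ring. Qed.

Lemma NN_P (K : fieldType) (P Q : pt K) : lm_apply (NN P Q) P = (0, dlt P Q).
Proof. rewrite /lm_apply /lf_eval /NN /vanish_lf /dlt /=; congr pair; ring. Qed.

Lemma NN_Q (K : fieldType) (P Q : pt K) : lm_apply (NN P Q) Q = (- dlt P Q, 0).
Proof. rewrite /lm_apply /lf_eval /NN /vanish_lf /dlt /=; congr pair; ring. Qed.

Lemma lin0 (K : fieldType) (M : lmap K) : lm_apply M (0, 0) = (0, 0).
Proof. by rewrite /lm_apply /lf_eval /= !mulr0 addr0. Qed.


Lemma peqE (K : fieldType) (p q : pt K) : peq p q = (dlt p q == 0).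
Proof. by rewrite /peq /dlt subr_eq0. Qed.

Lemma pnzP (K : fieldType) (p : pt K) : pnz p <-> (p.1 != 0 \/ p.2 != 0).
Proof.
case: p => a b; rewrite /pnz /= xpair_eqE negb_and.
by split; [move/orP | move=> h; apply/orP].
Qed.

Lemma peq_refl (K : fieldType) (p : pt K) : peq p p.
Proof. by rewrite /peq mulrC. Qed.

Lemma peq_sym (K : fieldType) (p q : pt K) : peq p q -> peq q p.
Proof. by rewrite /peq => /eqP h; apply/eqP; rewrite mulrC -h mulrC. Qed.

Lemma peq_trans (K : fieldType) (p q r : pt K) :
  pnz q -> peq p q -> peq q r -> peq p r.
Proof.
rewrite !peqE => /pnzP hq /eqP h1 /eqP h2.
case: hq => hq.
- have : q.1 * dlt p r = 0.
    rewrite (_ : q.1 * dlt p r = p.1 * dlt q r + r.1 * dlt p q); last by rewrite /dlt; ring.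
    by rewrite h1 h2; ring.
  by move/eqP; rewrite mulf_eq0 (negbTE hq).
- have : q.2 * dlt p r = 0.
    rewrite (_ : q.2 * dlt p r = p.2 * dlt q r + r.2 * dlt p q); last by rewrite /dlt; ring.
    by rewrite h1 h2; ring.
  by move/eqP; rewrite mulf_eq0 (negbTE hq).
Qed.

Lemma npeq_pnz (K : fieldType) (p q : pt K) : ~~ peq p q -> pnz p.
Proof.
apply: contraR; rewrite /pnz negbK => /eqP ->; by rewrite /peq /= !mul0r.
Qed.

Lemma peq_lin (K : fieldType) (M : lmap K) x y :
  lm_det M != 0 -> peq (lm_apply M x) (lm_apply M y) = peq x y.
Proof. by move=> h; rewrite !peqE lin_dlt mulf_eq0 (negbTE h). Qed.

Lemma pnz_lin (K : fieldType) (M : lmap K) x :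
  lm_det M != 0 -> pnz x -> pnz (lm_apply M x).
Proof.
move=> hd /pnzP hx; apply/negP => /eqP.
case: M hd => [[a b] [c e]]; rewrite /lm_apply /lf_eval /lm_det /= => hd [e1 e2].
have h1 : (a * e - b * c) * x.1 = 0.
  rewrite (_ : (a * e - b * c) * x.1 = e * (a * x.1 + b * x.2) - b * (c * x.1 + e * x.2)); last by ring.
  by rewrite e1 e2; ring.
have h2 : (a * e - b * c) * x.2 = 0.
  rewrite (_ : (a * e - b * c) * x.2 = a * (c * x.1 + e * x.2) - c * (a * x.1 + b * x.2)); last by ring.
  by rewrite e1 e2; ring.
move/eqP: h2; move/eqP: h1; rewrite !mulf_eq0 (negbTE hd) /= => /eqP h1 /eqP h2.
by case: hx; rewrite ?h1 ?h2 eqxx.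
Qed.

Lemma S_peq (K : fieldType) (f : qmap K) x y :
  peq x y -> peq (qapply f x) (qapply f y).
Proof. by rewrite !peqE S_dlt => /eqP ->; rewrite mul0r. Qed.

Lemma two_neq0_16 (K : fieldType) : (2%:R : K) != 0 -> (16%:R : K) != 0.
Proof. by move=> h; rewrite (_ : 16 = 2 ^ 4)%N // natrX expf_neq0. Qed.

Lemma NF (K : fieldType) (h2 : (2%:R : K) != 0) (f : qmap K) (P Q : pt K) :
  is_quad_morphism f P Q ->
  dlt P Q != 0 /\ exists a0 a2 b0 b2 : K, a0 * b2 - a2 * b0 != 0 /\
   bf_scale (dlt P Q ^+ 2) (qF (lm_after (NN P Q) f)) = bf_subst (BF a0 0 a2) (NN P Q) /\
   bf_scale (dlt P Q ^+ 2) (qG (lm_after (NN P Q) f)) = bf_subst (BF b0 0 b2) (NN P Q).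
Proof.
case=> hP hQ hres [c [hc hj]].
have hd : dlt P Q != 0.
  apply: contra hres => /eqP hd0.
  have e := jac_disc (qF f) (qG f); rewrite hj disc_lmul hd0 in e.
  have : 16%:R * bres (qF f) (qG f) = 0 by rewrite -e; ring.
  by move/eqP; rewrite mulf_eq0 (negbTE (two_neq0_16 h2)).
split=> //.
have hJ := jac_fN hj.
case eF: (qF (fN f P Q)) hJ => [a0 a1 a2]; case eG: (qG (fN f P Q)) => [b0 b1 b2].
rewrite jac_coef => -[e0 e1 e2].
have x0 : a0 * b1 - a1 * b0 = 0 by move/eqP: e0; rewrite mulf_eq0 (negbTE h2) /= => /eqP.
have x2 : a1 * b2 - a2 * b1 = 0 by move/eqP: e2; rewrite mulf_eq0 (negbTE h2) /= => /eqP.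
have hD : a0 * b2 - a2 * b0 != 0.
  apply/negP => /eqP hD; move: e1; rewrite hD mulr0 => /esym/eqP.
  by rewrite mulf_eq0 (negbTE hc) expf_eq0 /= (negbTE hd).
have ha1 : a1 = 0.
  have : a1 * (a0 * b2 - a2 * b0) = 0.
    rewrite (_ : a1 * (a0 * b2 - a2 * b0) = a0 * (a1 * b2 - a2 * b1) + a2 * (a0 * b1 - a1 * b0)); last by ring.
    by rewrite x0 x2; ring.
  by move/eqP; rewrite mulf_eq0 (negbTE hD) orbF => /eqP.
have hb1 : b1 = 0.
  have : b1 * (a0 * b2 - a2 * b0) = 0.
    rewrite (_ : b1 * (a0 * b2 - a2 * b0) = b2 * (a0 * b1 - a1 * b0) + b0 * (a1 * b2 - a2 * b1)); last by ring.
    by rewrite x0 x2; ring.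
  by move/eqP; rewrite mulf_eq0 (negbTE hD) orbF => /eqP.
exists a0, a2, b0, b2; split=> //.
by rewrite -fN_formF -fN_formG eF eG ha1 hb1.
Qed.


Lemma NFpt (K : fieldType) (h2 : (2%:R : K) != 0) (f : qmap K) (P Q : pt K) :
  is_quad_morphism f P Q ->
  exists a0 a2 b0 b2 : K, [/\ dlt P Q != 0, a0 * b2 - a2 * b0 != 0,
   (forall x, dlt P Q ^+ 2 * (lm_apply (NN P Q) (qapply f x)).1 =
      a0 * (lm_apply (NN P Q) x).1 ^+ 2 + a2 * (lm_apply (NN P Q) x).2 ^+ 2),
   (forall x, dlt P Q ^+ 2 * (lm_apply (NN P Q) (qapply f x)).2 =
      b0 * (lm_apply (NN P Q) x).1 ^+ 2 + b2 * (lm_apply (NN P Q) x).2 ^+ 2) &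
   (bf_scale (dlt P Q ^+ 2) (qF (lm_after (NN P Q) f)) = bf_subst (BF a0 0 a2) (NN P Q) /\
    bf_scale (dlt P Q ^+ 2) (qG (lm_after (NN P Q) f)) = bf_subst (BF b0 0 b2) (NN P Q))].
Proof.
move=> hf; have [hd [a0 [a2 [b0 [b2 [hD [eF eG]]]]]]] := NF h2 hf.
exists a0, a2, b0, b2; split=> // x.
- have := congr1 (fun F => bf_eval F x) eF; rewrite /= eval_scale subst_eval.
  rewrite (_ : bf_eval (qF (lm_after (NN P Q) f)) x = (qapply (lm_after (NN P Q) f) x).1) //.
  by rewrite after_eval => ->; rewrite /bf_eval /=; ring.
- have := congr1 (fun F => bf_eval F x) eG; rewrite /= eval_scale subst_eval.
  rewrite (_ : bf_eval (qG (lm_after (NN P Q) f)) x = (qapply (lm_after (NN P Q) f) x).2) //.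
  by rewrite after_eval => ->; rewrite /bf_eval /=; ring.
Qed.

Lemma S_pnz (K : fieldType) (h2 : (2%:R : K) != 0) (f : qmap K) (P Q : pt K) x :
  is_quad_morphism f P Q -> pnz x -> pnz (qapply f x).
Proof.
move=> hf hx; have [a0 [a2 [b0 [b2 [hd hD e1 e2 _]]]]] := NFpt h2 hf.
have hdet : lm_det (NN P Q) != 0 by rewrite det_NN.
have hNx := pnz_lin hdet hx.
apply/negP => /eqP hS.
have := e1 x; have := e2 x; rewrite hS lin0.
move: hNx; rewrite /pnz [lm_apply _ x]surjective_pairing.
move: (lm_apply (NN P Q) x).1 (lm_apply (NN P Q) x).2 => u v huv.
rewrite /= mulr0 => h2' h1'.
have hu : u = 0.
  have : u ^+ 2 * (a0 * b2 - a2 * b0) = 0.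
    rewrite (_ : u ^+ 2 * (a0 * b2 - a2 * b0) = b2 * (a0 * u ^+ 2 + a2 * v ^+ 2) - a2 * (b0 * u ^+ 2 + b2 * v ^+ 2)); last by ring.
    by rewrite -h1' -h2'; ring.
  by move/eqP; rewrite mulf_eq0 (negbTE hD) orbF expf_eq0 /= => /eqP.
have hv : v = 0.
  have : v ^+ 2 * (a0 * b2 - a2 * b0) = 0.
    rewrite (_ : v ^+ 2 * (a0 * b2 - a2 * b0) = a0 * (b0 * u ^+ 2 + b2 * v ^+ 2) - b0 * (a0 * u ^+ 2 + a2 * v ^+ 2)); last by ring.
    by rewrite -h1' -h2'; ring.
  by move/eqP; rewrite mulf_eq0 (negbTE hD) orbF expf_eq0 /= => /eqP.
by move: huv; rewrite hu hv eqxx.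
Qed.


Lemma NSPQ (K : fieldType) (h2 : (2%:R : K) != 0) (f : qmap K) (P Q : pt K) :
  is_quad_morphism f P Q ->
  exists a0 a2 b0 b2 : K, [/\ dlt P Q != 0, a0 * b2 - a2 * b0 != 0,
   lm_apply (NN P Q) (qapply f P) = (a2, b2),
   lm_apply (NN P Q) (qapply f Q) = (a0, b0) &
   [/\ (forall x, dlt P Q ^+ 2 * (lm_apply (NN P Q) (qapply f x)).1 =
      a0 * (lm_apply (NN P Q) x).1 ^+ 2 + a2 * (lm_apply (NN P Q) x).2 ^+ 2),
   (forall x, dlt P Q ^+ 2 * (lm_apply (NN P Q) (qapply f x)).2 =
      b0 * (lm_apply (NN P Q) x).1 ^+ 2 + b2 * (lm_apply (NN P Q) x).2 ^+ 2),
   bf_scale (dlt P Q ^+ 2) (qF (lm_after (NN P Q) f)) = bf_subst (BF a0 0 a2) (NN P Q) &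
    bf_scale (dlt P Q ^+ 2) (qG (lm_after (NN P Q) f)) = bf_subst (BF b0 0 b2) (NN P Q)]].
Proof.
move=> hf; have [a0 [a2 [b0 [b2 [hd hD e1 e2 [eF eG]]]]]] := NFpt h2 hf.
have hd2 : dlt P Q ^+ 2 != 0 := expf_neq0 2 hd.
exists a0, a2, b0, b2; split=> //.
- have := e1 P; have := e2 P; rewrite NN_P; cbn [fst snd] => E2 E1.
  by rewrite [LHS]surjective_pairing; congr pair; apply: (mulfI hd2); [rewrite E1 | rewrite E2]; ring.
- have := e1 Q; have := e2 Q; rewrite NN_Q; cbn [fst snd] => E2 E1.
  by rewrite [LHS]surjective_pairing; congr pair; apply: (mulfI hd2); [rewrite E1 | rewrite E2]; ring.
Qed.

Lemma crit_fiber (K : fieldType) (h2 : (2%:R : K) != 0) (f : qmap K) (P Q : pt K) x :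
  is_quad_morphism f P Q -> 
  (peq (qapply f x) (qapply f P) -> peq x P) /\ (peq (qapply f x) (qapply f Q) -> peq x Q).
Proof.
move=> hf; have [a0 [a2 [b0 [b2 [hd hD hSP hSQ [e1 e2 _ _]]]]]] := NSPQ h2 hf.
have hdet : lm_det (NN P Q) != 0 by rewrite det_NN.
have hd2 : dlt P Q ^+ 2 != 0 := expf_neq0 2 hd.
rewrite -(peq_lin (qapply f x) (qapply f P) hdet) -(peq_lin (qapply f x) (qapply f Q) hdet).
rewrite -(peq_lin x P hdet) -(peq_lin x Q hdet) hSP hSQ NN_P NN_Q.
rewrite [lm_apply _ (qapply f x)]surjective_pairing [lm_apply _ x]surjective_pairing.
move: (e1 x) (e2 x).
move: (lm_apply (NN P Q) (qapply f x)).1 (lm_apply (NN P Q) (qapply f x)).2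
      (lm_apply (NN P Q) x).1 (lm_apply (NN P Q) x).2 => X1 X2 u v E1 E2.
rewrite /peq /=; split=> /eqP h; apply/eqP.
- have : u ^+ 2 * (a0 * b2 - a2 * b0) = 0.
    rewrite (_ : u ^+ 2 * (a0 * b2 - a2 * b0) = dlt P Q ^+ 2 * (X1 * b2 - X2 * a2)).
      by rewrite h subrr mulr0.
    rewrite (_ : dlt P Q ^+ 2 * (X1 * b2 - X2 * a2) = (dlt P Q ^+ 2 * X1) * b2 - (dlt P Q ^+ 2 * X2) * a2); last by ring.
    by rewrite E1 E2; ring.
  move/eqP; rewrite mulf_eq0 (negbTE hD) orbF expf_eq0 /= => /eqP ->.
  by rewrite mul0r mulr0.
- have : v ^+ 2 * (a0 * b2 - a2 * b0) = 0.
    rewrite (_ : v ^+ 2 * (a0 * b2 - a2 * b0) = dlt P Q ^+ 2 * (X2 * a0 - X1 * b0)).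
      by rewrite h subrr mulr0.
    rewrite (_ : dlt P Q ^+ 2 * (X2 * a0 - X1 * b0) = (dlt P Q ^+ 2 * X2) * a0 - (dlt P Q ^+ 2 * X1) * b0); last by ring.
    by rewrite E1 E2; ring.
  move/eqP; rewrite mulf_eq0 (negbTE hD) orbF expf_eq0 /= => /eqP ->.
  by rewrite mul0r mulr0.
Qed.

Lemma crit_values (K : fieldType) (h2 : (2%:R : K) != 0) (f : qmap K) (P Q : pt K) :
  is_quad_morphism f P Q -> ~~ peq (qapply f P) (qapply f Q).
Proof.
move=> hf; have [a0 [a2 [b0 [b2 [hd hD hSP hSQ _]]]]] := NSPQ h2 hf.
have hdet : lm_det (NN P Q) != 0 by rewrite det_NN.
rewrite -(peq_lin (qapply f P) (qapply f Q) hdet) hSP hSQ /peq /=.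
apply: contra hD => /eqP h; apply/eqP.
by rewrite [a0 * b2]mulrC -h subrr.
Qed.


Lemma scale_solve (K : fieldType) (k : K) (X Y : bform K) :
  k != 0 -> bf_scale k X = Y -> X = bf_scale k^-1 Y.
Proof. by move=> hk <-; rewrite scale_scale mulVf // ; case: X => *; rewrite /bf_scale /= !mul1r. Qed.

Lemma scale_subst_eq (K : fieldType) (k1 k2 a b c a' b' c' : K) M :
  k1 * a = k2 * a' -> k1 * b = k2 * b' -> k1 * c = k2 * c' ->
  bf_scale k1 (bf_subst (BF a b c) M) = bf_scale k2 (bf_subst (BF a' b' c') M).
Proof. by move=> e1 e2 e3; rewrite -!subst_BF_scale e1 e2 e3. Qed.

Lemma not_b_std (K : fieldType) (h2 : (2%:R : K) != 0) (f : qmap K) (P Q : pt K) :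
  is_quad_morphism f P Q -> ~~ cond_b f P Q -> is_standard f P Q.
Proof.
move=> hf; have [a0 [a2 [b0 [b2 [hd hD hSP hSQ [_ _ eF eG]]]]]] := NSPQ h2 hf.
have hdet : lm_det (NN P Q) != 0 by rewrite det_NN.
have hd2 : dlt P Q ^+ 2 != 0 := expf_neq0 2 hd.
rewrite /cond_b negb_or !negb_and !negbK.
rewrite -(peq_lin (qapply f P) P hdet) -(peq_lin (qapply f P) Q hdet).
rewrite -(peq_lin (qapply f Q) P hdet) -(peq_lin (qapply f Q) Q hdet).
rewrite hSP hSQ NN_P NN_Q /peq /= !mulr0 ![_ == _ * - _]eq_sym !mulf_eq0 oppr_eq0 (negbTE hd) !orbF.
have {}eF := scale_solve hd2 eF; have {}eG := scale_solve hd2 eG.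
have hP : peq (lm_apply (NN P Q) P) (zero_pt K) by rewrite NN_P /peq /= mul0r mulr0.
have hQ : peq (lm_apply (NN P Q) Q) (inf_pt K) by rewrite NN_Q /peq /= mul0r mulr0.
case/andP => /orP [/eqP ha2 | /eqP hb2] /orP [/eqP ha0 | /eqP hb0].
- by move: hD; rewrite ha2 ha0 !mul0r subrr eqxx.
- have hb2 : b2 != 0 by apply: contra hD => /eqP ->; rewrite ha2 hb0 !mulr0 subrr.
  have ha0 : a0 != 0 by apply: contra hD => /eqP ->; rewrite ha2 hb0 !mul0r subrr.
  exists (a0 / b2), true, (NN P Q); split.
    by rewrite mulf_neq0 // invr_neq0.
  split=> //.
  exists (b2 / dlt P Q ^+ 2); split; first by rewrite mulf_neq0 // invr_neq0.
  rewrite eF eG /std_map /qm_before /=; rewrite ha2 hb0.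
  split; apply: scale_subst_eq; rewrite ?mulr0 //; field; by rewrite ?hb2 ?hb0 hd.
- have hb0 : b0 != 0 by apply: contra hD => /eqP ->; rewrite hb2 ha0 !mulr0 subrr.
  have ha2 : a2 != 0 by apply: contra hD => /eqP ->; rewrite hb2 ha0 !mul0r subrr.
  exists (a2 / b0), false, (NN P Q); split.
    by rewrite mulf_neq0 // invr_neq0.
  split=> //.
  exists (b0 / dlt P Q ^+ 2); split; first by rewrite mulf_neq0 // invr_neq0.
  rewrite eF eG /std_map /qm_before /=; rewrite hb2 ha0.
  split; apply: scale_subst_eq; rewrite ?mulr0 //; field; by rewrite ?hb2 ?hb0 hd.
- by move: hD; rewrite hb2 hb0 !mulr0 subrr eqxx.
Qed.


Lemma iso_pt (K : fieldType) (M : lmap K) (f g : qmap K) :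
  qm_equiv (lm_after M f) (qm_before g M) ->
  exists2 l, l != 0 & forall x, lm_apply M (qapply f x) =
     (l * (qapply g (lm_apply M x)).1, l * (qapply g (lm_apply M x)).2).
Proof.
case=> l [hl [eF eG]]; exists l => // x.
rewrite -after_eval /qapply eF eG !eval_scale.
change (qF (qm_before g M)) with (bf_subst (qF g) M).
change (qG (qm_before g M)) with (bf_subst (qG g) M).
by rewrite !subst_eval.
Qed.

Lemma std_not_b (K : fieldType) (f : qmap K) (P Q : pt K) :
  is_standard f P Q -> ~~ cond_b f P Q.
Proof.
case=> a [s [M [ha [hdet hiso hP hQ]]]]; have [l hl hpt] := iso_pt hiso.
rewrite /cond_b negb_or !negb_and !negbK.
rewrite -(peq_lin (qapply f P) P hdet) -(peq_lin (qapply f P) Q hdet).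
rewrite -(peq_lin (qapply f Q) P hdet) -(peq_lin (qapply f Q) Q hdet) !hpt.
move: hP hQ; rewrite [lm_apply M P]surjective_pairing [lm_apply M Q]surjective_pairing.
move: (lm_apply M P).1 (lm_apply M P).2 (lm_apply M Q).1 (lm_apply M Q).2 => p1 p2 q1 q2.
rewrite /peq /= mulr1 mulr0 => /eqP -> /eqP; rewrite mulr1 mulr0 => <-.
move: hiso hpt => _ _; case: s; rewrite /std_map /qapply /bf_eval /=.
- by apply/andP; split; apply/orP; [left | right]; apply/eqP; ring.
- by apply/andP; split; apply/orP; [right | left]; apply/eqP; ring.
Qed.

Definition phi (K : fieldType) (al be ga : K) (p : pt K) :=
  al * p.1 ^+ 2 + be * p.1 * p.2 + ga * p.2 ^+ 2.

Lemma lagrange2 (K : fieldType) (al be ga : K) (z w t x : pt K) :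
  dlt z w * dlt z t * dlt w t * phi al be ga x =
  phi al be ga z * dlt x w * dlt x t * dlt w t - phi al be ga w * dlt x z * dlt x t * dlt z t
  + phi al be ga t * dlt x z * dlt x w * dlt z w.
Proof. rewrite /phi /dlt; ring. Qed.

Lemma fix3 (K : fieldType) (M : lmap K) (z w t : pt K) :
  ~~ peq z w -> ~~ peq z t -> ~~ peq w t ->
  peq (lm_apply M z) z -> peq (lm_apply M w) w -> peq (lm_apply M t) t ->
  [/\ ly (m1 M) = 0, lx (m2 M) = 0 & lx (m1 M) = ly (m2 M)].
Proof.
case: M => [[a b] [c e]] /=; rewrite !peqE => hzw hzt hwt.
have fixphi : forall p : pt K, dlt (lm_apply (LM (LF a b) (LF c e)) p) p == 0 ->
    phi c (e - a) (- b) p = 0.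
  move=> p; rewrite -peqE /peq /lm_apply /lf_eval /= => /eqP hp.
  rewrite (_ : phi c (e - a) (- b) p = (c * p.1 + e * p.2) * p.1 - (a * p.1 + b * p.2) * p.2).
    by rewrite hp subrr.
  by rewrite /phi; ring.
move=> /fixphi Hz /fixphi Hw /fixphi Ht.
have hD : dlt z w * dlt z t * dlt w t != 0 by rewrite !mulf_neq0.
have H : forall x, phi c (e - a) (- b) x = 0.
  move=> x; have := lagrange2 c (e - a) (- b) z w t x.
  rewrite Hz Hw Ht !mul0r subrr addr0 => /eqP.
  by rewrite mulf_eq0 (negbTE hD) /= => /eqP.
have := H (1, 0); have := H (0, 1); have := H (1, 1).
rewrite /phi /= !expr1n !expr0n /= !mulr1 !mulr0 !addr0 !add0r.
move=> h11 hb hc; split.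
- by rewrite -[b]opprK hb oppr0.
- exact: hc.
- move: h11; rewrite hc hb add0r addr0 => /eqP; rewrite subr_eq0 => /eqP ->. done.
Qed.


Lemma iter_pnz (K : fieldType) (h2 : (2%:R : K) != 0) (f : qmap K) (P Q : pt K) x n :
  is_quad_morphism f P Q -> pnz x -> pnz (iter n (qapply f) x).
Proof. move=> hf hx; elim: n => [|n IH] //; rewrite iterS; exact: (S_pnz h2 hf IH). Qed.

Lemma same_cls (K : fieldType) (a b X : pt K) : pnz X -> peq a X -> peq b X -> peq a b.
Proof. by move=> hX ha hb; apply: peq_trans hX ha (peq_sym hb). Qed.

Lemma aut_iter (K : fieldType) (h2 : (2%:R : K) != 0) (f : qmap K) (P Q : pt K) (M : lmap K) l x :
  is_quad_morphism f P Q -> lm_det M != 0 ->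
  (forall x, lm_apply M (qapply f x) =
     (l * (qapply f (lm_apply M x)).1, l * (qapply f (lm_apply M x)).2)) ->
  pnz x -> peq (lm_apply M x) x ->
  forall n, peq (lm_apply M (iter n (qapply f) x)) (iter n (qapply f) x).
Proof.
move=> hf hdet hpt hx hMx; elim=> [|n IH] //; rewrite iterS.
set y := iter n (qapply f) x in IH *.
have hy : pnz y := iter_pnz h2 n hf hx.
have hMy : pnz (qapply f (lm_apply M y)) := S_pnz h2 hf (pnz_lin hdet hy).
apply: peq_trans hMy _ (S_peq f IH).
by rewrite hpt /peq /=; apply/eqP; ring.
Qed.

Unset Implicit Arguments.
Theorem proposition1p4 (K : fieldType) (h2 : (2%:R : K) != 0)
    (f : qmap K) (P Q : pt K) (hf : is_quad_morphism f P Q) :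
  (postcrit_ge3 f P Q <-> cond_b f P Q) /\
  (cond_b f P Q <-> ~ is_standard f P Q) /\
  (postcrit_ge3 f P Q -> aut_trivial f P Q).
Proof.
have [hP hQ _ _] := hf.
set S := qapply f.
have Hb2a : cond_b f P Q -> postcrit_ge3 f P Q.
  have hfib := fun x => crit_fiber h2 x hf.
  have hcv := crit_values h2 hf.
  rewrite /cond_b => /orP [/andP [h1 h3] | /andP [h1 h3]].
  - exists (S P), (S Q), (S (S P)); split; first split.
    + by exists 1%N; split => //; left; exact: peq_refl.
    + by exists 1%N; split => //; right; exact: peq_refl.
    + by exists 2%N; split => //; left; exact: peq_refl.
    split => //.
    + apply/negP => /peq_sym /(proj1 (hfib _)) h; by rewrite h in h1.
    + apply/negP => /peq_sym /(proj2 (hfib _)) h; by rewrite h in h3.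
  - exists (S Q), (S P), (S (S Q)); split; first split.
    + by exists 1%N; split => //; right; exact: peq_refl.
    + by exists 1%N; split => //; left; exact: peq_refl.
    + by exists 2%N; split => //; right; exact: peq_refl.
    split => //.
    + by apply/negP => /peq_sym h; rewrite h in hcv.
    + apply/negP => /peq_sym /(proj2 (hfib _)) h; by rewrite h in h3.
    + apply/negP => /peq_sym /(proj1 (hfib _)) h; by rewrite h in h1.
have Ha2b : postcrit_ge3 f P Q -> cond_b f P Q.
  move=> [z1 [z2 [z3 [[i1 i2 i3] [d12 d13 d23]]]]].
  case hb: (cond_b f P Q) => //; exfalso.
  move/negbT: hb; rewrite /cond_b negb_or !negb_and !negbK => /andP [hSP hSQ].
  have step : forall y, pnz y -> (peq y P || peq y Q) -> (peq (S y) P || peq (S y) Q).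
    move=> y hy /orP [hyP | hyQ].
    + case/orP: hSP => h; apply/orP; [left | right];
        exact: (peq_trans (S_pnz h2 hf hP) (S_peq f hyP) h).
    + case/orP: hSQ => h; apply/orP; [left | right];
        exact: (peq_trans (S_pnz h2 hf hQ) (S_peq f hyQ) h).
  have hit : forall x, pnz x -> (peq (S x) P || peq (S x) Q) ->
      forall n, (peq (iter n.+1 S x) P || peq (iter n.+1 S x) Q).
    move=> x hx h0; elim=> // n IH.
    rewrite iterS; apply: step => //; exact: (iter_pnz h2 n.+1 hf hx).
  have cls : forall z, in_postcrit f P Q z -> peq z P || peq z Q.
    move=> z [[|n] [hn hz]] //.
    have hPn := iter_pnz h2 n.+1 hf hP; have hQn := iter_pnz h2 n.+1 hf hQ.
    case: hz => hz.
    + case/orP: (hit P hP hSP n) => h; apply/orP; [left | right]; exact: (peq_trans hPn hz h).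
    + case/orP: (hit Q hQ hSQ n) => h; apply/orP; [left | right]; exact: (peq_trans hQn hz h).
  move: (cls _ i1) (cls _ i2) (cls _ i3) => /orP [c1|c1] /orP [c2|c2] /orP [c3|c3].
  all: try first [ by move: d12; rewrite (same_cls hP c1 c2) | by move: d12; rewrite (same_cls hQ c1 c2)
             | by move: d13; rewrite (same_cls hP c1 c3) | by move: d13; rewrite (same_cls hQ c1 c3)
             | by move: d23; rewrite (same_cls hP c2 c3) | by move: d23; rewrite (same_cls hQ c2 c3) ].
split; first by split.
split.
  split.
  - by move=> hb hs; move: (std_not_b hs); rewrite hb.
  - move=> hns; case hb: (cond_b f P Q) => //; exfalso; apply: hns.
    by apply: (not_b_std h2 hf); rewrite hb.
move=> [z1 [z2 [z3 [[i1 i2 i3] [d12 d13 d23]]]]] M [hdet hiso hMP hMQ].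
have [l hl hpt] := iso_pt hiso.
have fixz : forall z, in_postcrit f P Q z -> peq (lm_apply M z) z.
  move=> z [n [_ hz]].
  have key : forall X, pnz X -> peq (lm_apply M X) X -> peq z (iter n S X) ->
      peq (lm_apply M z) z.
    move=> X hX hMX hzX.
    have hy := iter_pnz h2 n hf hX.
    have hMy := aut_iter h2 hf hdet hpt hX hMX n.
    have h1 : peq (lm_apply M z) (lm_apply M (iter n S X)) by rewrite peq_lin.
    exact: (peq_trans hy (peq_trans (pnz_lin hdet hy) h1 hMy) (peq_sym hzX)).
  by case: hz; [apply: key hP hMP | apply: key hQ hMQ].
exact: (fix3 d12 d13 d23 (fixz _ i1) (fixz _ i2) (fixz _ i3)).
Qed.
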